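(* Let $G$ be a bipartite graph with no universal vertex, let $B_0\in\mathcal{B}(G)$ and $v\in B_0$, and suppose $B_0-v\in\mathcal{B}(G-v)$. Then: (i) for every $B\in\mathcal{B}(G)$ with $B-v\in\mathcal{B}(G-v)$ such that $(B,B_0)$ is an arc of $\mathbf{H}(G)$, $(B-v,B_0-v)$ is an arc of $\mathbf{H}(G-v)$; (ii) for every $B\in\mathcal{B}(G)$ with $B-v\in\mathcal{B}(G-v)$ such that $(B_0,B)$ is an arc of $\mathbf{H}(G)$, $(B_0-v,B-v)$ is an arc of $\mathbf{H}(G-v)$.
   Context: For a bipartite graph with color classes $X,Y$, a biclique is a vertex set inducing a complete bipartite subgraph with shores $X(B)=B\cap X$, $Y(B)=B\cap Y$; $\mathcal{B}(G)$ is the set of inclusion-wise maximal bicliques, ordered by $B\preceq B'\iff X(B)\subseteq X(B')$. $\mathbf{H}(G)$ is the transitive reduction of $(\mathcal{B}(G),\preceq)$: arc $(B,B')$ iff $B'$ covers $B$. For $v\in B$, $B-v$ denotes the biclique with vertex set $B\setminus\{v\}$; $G-v$ is $G$ with $v$ deleted. A universal vertex is adjacent to all vertices of the opposite color class. *)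

(* Defs.v *)
From mathcomp Require Import all_boot.
Set Implicit Arguments. Unset Strict Implicit. Unset Printing Implicit Defensive.

(* A bipartite graph G is given by a finite vertex type T, a vertex set
   V : {set T}, a colour class X \subset V (the other colour class is
   Y = V :\: X) and a symmetric adjacency relation e whose edges join a
   vertex of X to a vertex of Y inside V. *)
Definition bipartite (T : finType) (V X : {set T}) (e : rel T) : Prop :=
  [/\ X \subset V, symmetric e &
      forall x y, e x y -> [/\ x \in V, y \in V & (x \in X) != (y \in X)]].

Definition universal (T : finType) (V X : {set T}) (e : rel T) (u : T) : Prop :=
  u \in V /\
  (if u \in X then forall y, y \in V :\: X -> e u y
   else forall x, x \in X -> e u x).

Definition no_universal (T : finType) (V X : {set T}) (e : rel T) : Prop :=
  forall u, ~ universal V X e u.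

(* B induces a complete bipartite subgraph with shores B :&: X and
   B :&: (V :\: X) = B :\: X (shores may be empty). *)
Definition biclique (T : finType) (V X : {set T}) (e : rel T) (B : {set T}) : Prop :=
  B \subset V /\ forall x y, x \in B :&: X -> y \in B :\: X -> e x y.

Definition maxbiclique (T : finType) (V X : {set T}) (e : rel T) (B : {set T}) : Prop :=
  biclique V X e B /\
  forall B', biclique V X e B' -> B \subset B' -> B' = B.

Definition bprec (T : finType) (X : {set T}) (B B' : {set T}) : bool :=
  B :&: X \subset B' :&: X.

Definition bstrict (T : finType) (X : {set T}) (B B' : {set T}) : Prop :=
  bprec X B B' /\ B <> B'.

Definition Harc (T : finType) (V X : {set T}) (e : rel T) (B B' : {set T}) : Prop :=
  [/\ maxbiclique V X e B, maxbiclique V X e B', bstrict X B B' &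
      ~ exists C, [/\ maxbiclique V X e C, bstrict X B C & bstrict X C B']].

(* G - v has vertex set V :\ v, colour classes X :\ v and (V :\: X) :\ v,
   and the same adjacency restricted to V :\ v (bicliques are subsets of
   V :\ v, so edges at v are irrelevant). *)

(* Main.v *)
Require Import Defs.
From mathcomp Require Import all_boot.
From Stdlib Require Import Classical.

Set Implicit Arguments.
Section L.
Variables (T : finType) (V X : {set T}) (e : rel T) (v : T).

Lemma bic_del B : biclique V X e B -> biclique (V :\ v) (X :\ v) e (B :\ v).
Proof.
case=> /subsetP sBV Hb; split.
  by apply/subsetP => x; rewrite !inE => /andP[-> /sBV ->].
move=> x y; rewrite !inE => /and3P[/andP[_ xB] _ xX] /and3P[h yv yB].
apply: Hb; rewrite !inE ?xB ?xX ?yB //=; move: h; by rewrite yv andbT.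
Qed.

Lemma bic_up C : biclique (V :\ v) (X :\ v) e C -> biclique V X e C.
Proof.
case=> /subsetP sCV Hc; split.
  by apply/subsetP => x /sCV; rewrite !inE => /andP[].
move=> x y; rewrite !inE => /andP[xC xX] /andP[yX yC]; apply: Hc.
  have := sCV x xC; rewrite !inE => /andP[xv _]; by rewrite xC xX xv.
by rewrite !inE yC (negbTE yX) andbF.
Qed.

Lemma ext C : maxbiclique (V :\ v) (X :\ v) e C ->
  exists C', [/\ maxbiclique V X e C', C' :\ v = C &
     (biclique V X e (v |: C) -> v \in C')].
Proof.
case=> Cb Cm.
have vC : v \notin C.
  apply/negP => vC; case: Cb => /subsetP s _; have := s v vC; by rewrite !inE eqxx.
have Cv : C :\ v = C.
  apply/setP => x; rewrite !inE; case: eqP => // ->; by rewrite (negbTE vC).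
have key : forall B', biclique V X e B' -> C \subset B' -> B' :\ v = C.
  move=> B' b' s; apply: Cm; first exact: bic_del.
  apply/subsetP => x xC; rewrite !inE (subsetP s x xC) andbT.
  by apply/eqP => xv; rewrite -xv xC in vC.
case: (classic (biclique V X e (v |: C))) => H.
  exists (v |: C); split => //; last by rewrite !inE eqxx.
    split => // B' b' s; have := key B' b' (subset_trans (subsetUr _ _) s).
    move=> E; apply/setP => x; rewrite !inE; case: eqP => [->|xv].
      by rewrite (subsetP s v) // !inE eqxx.
    by rewrite -E !inE; case: eqP.
  apply/setP => x; rewrite !inE; case: eqP => //= ->; by rewrite (negbTE vC).
exists C; split => //.
  split; first exact: bic_up.
  move=> B' b' s; have E := key B' b' s.
  case vB: (v \in B').
    exfalso; apply: H; suff -> : v |: C = B' by [].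
    apply/setP => x; rewrite !inE -E !inE; case: eqP => [->|] //=.
  apply/setP => x; rewrite -E !inE; case: eqP => // ->; by rewrite vB.
Qed.

Lemma addv D C : maxbiclique V X e D -> maxbiclique (V :\ v) (X :\ v) e (D :\ v) ->
  v \in D -> v \in X -> biclique (V :\ v) (X :\ v) e C ->
  (D :\ v) :&: (X :\ v) \subset C :&: (X :\ v) -> biclique V X e (v |: C).
Proof.
move=> [[/subsetP sDV Db] _] [Dvb Dvm] vD vX Cb sub.
have Cb' := bic_up Cb.
case: Cb => /subsetP sCV Hc.
split.
  apply/subsetP => x; rewrite !inE; case/orP => [/eqP ->|/sCV]; first exact: sDV.
  by rewrite !inE => /andP[].
move=> x y; rewrite !inE => /andP[xvC xX] /andP[yX yvC].
have yv : y != v by apply/eqP => yv; rewrite yv vX in yX.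
have yC : y \in C by move: yvC; rewrite (negbTE yv).
case/orP: xvC => [/eqP ->|xC]; last first.
  by case: Cb' => _ h; apply: h; rewrite !inE ?xC ?xX ?yC ?yX.
have yD : y \in D :\ v.
  have : y |: (D :\ v) = D :\ v.
    apply: Dvm; last exact: subsetUr.
    split.
      apply/subsetP => z; rewrite !inE; case/orP => [/eqP ->|/andP[zv zD]].
        by have := sCV y yC; rewrite !inE.
      by rewrite zv sDV.
    move=> a b; rewrite !inE => /and3P[aD av aX] /andP[bX bD].
    have ay : (a == y) = false by apply/eqP => ay; rewrite -ay aX in yX.
    rewrite ay /= in aD; case/andP: aD => _ aD.
    have aC : a \in C.
      by have := subsetP sub a; rewrite !inE av aX aD /= => /(_ isT) /andP[].
    case/orP: bD => [/eqP ->|/andP[bv bD]].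
      by apply: Hc; rewrite !inE ?aC ?av ?aX ?yC ?yv ?(negbTE yX).
    apply: Db; rewrite !inE ?aD ?aX ?bD //=.
    by move: bX; rewrite bv andbT.
  by move=> <-; rewrite !inE eqxx.
move: yD; rewrite !inE => /andP[_ yD]; apply: Db; rewrite !inE ?vD ?vX ?yD ?yX //=.
Qed.

Lemma prec_del B B' : bprec X B B' -> bprec (X :\ v) (B :\ v) (B' :\ v).
Proof.
move=> /subsetP s; apply/subsetP => x; rewrite !inE => /and3P[/andP[xv xB] _ xX].
by have := s x; rewrite !inE xB xX xv => /(_ isT) /andP[->].
Qed.

Lemma strict_del B B0 : maxbiclique V X e B -> maxbiclique V X e B0 ->
  v \in B0 -> B <> B0 -> B :\ v <> B0 :\ v.
Proof.
move=> [bB mB] [bB0 _] vB0 nE E; apply: nE.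
case vB: (v \in B).
  apply/setP => x; case: (x =P v) => [->|/eqP xv]; first by rewrite vB vB0.
  by move/setP: E => /(_ x); rewrite !inE xv.
symmetry; apply: mB => //; apply/subsetP => x xB.
have : x \in B :\ v by rewrite !inE xB andbT; apply/eqP => xv; rewrite -xv xB in vB.
by rewrite E !inE => /andP[].
Qed.

Lemma lift_le P C C' : C' :\ v = C -> bprec (X :\ v) (P :\ v) C ->
  (v \in P -> v \in X -> v \in C') -> bprec X P C'.
Proof.
move=> E /subsetP s h; apply/subsetP => x; rewrite !inE => /andP[xP xX].
case: (x =P v) => [xv|/eqP xv]; first by rewrite xv h -?xv.
have := s x; rewrite !inE xv xP xX -E !inE xv /= => /(_ isT) /andP[-> _] //.
Qed.

Lemma lift_ge Q C C' : C' :\ v = C -> bprec (X :\ v) C (Q :\ v) ->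
  (v \in X -> v \in Q) -> bprec X C' Q.
Proof.
move=> E /subsetP s h; apply/subsetP => x; rewrite !inE => /andP[xC xX].
case: (x =P v) => [xv|/eqP xv]; first by rewrite xv h -?xv.
have := s x; rewrite !inE xv xX -E !inE xv xC /=; by apply.
Qed.
End L.

Theorem lemma4 (T : finType) (V X : {set T}) (e : rel T) :
  bipartite V X e -> no_universal V X e ->
  forall (B0 : {set T}) (v : T),
    maxbiclique V X e B0 -> v \in B0 ->
    maxbiclique (V :\ v) (X :\ v) e (B0 :\ v) ->
    (forall B, maxbiclique V X e B -> maxbiclique (V :\ v) (X :\ v) e (B :\ v) ->
       Harc V X e B B0 -> Harc (V :\ v) (X :\ v) e (B :\ v) (B0 :\ v)) /\
    (forall B, maxbiclique V X e B -> maxbiclique (V :\ v) (X :\ v) e (B :\ v) ->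
       Harc V X e B0 B -> Harc (V :\ v) (X :\ v) e (B0 :\ v) (B :\ v)).
Proof.
move=> _ _ B0 v mB0 vB0 mB0v; split.
  move=> B mB mBv [_ _ [pB nB] nC]; split => //.
    split; [exact: prec_del | exact: (strict_del mB mB0 vB0 nB)].
  case=> C [mC [pC nC1] [pC2 nC2]].
  have [C' [mC' EC vC']] := ext mC.
  apply: nC; exists C'; split => //; split.
  - apply: (lift_le EC pC) => vB vX; apply: vC'.
    apply: (addv mB mBv vB vX (proj1 mC) pC).
  - move=> E; apply: nC1; by rewrite -EC E.
  - by apply: (lift_ge EC pC2).
  - move=> E; apply: nC2; by rewrite -EC E.
move=> B mB mBv [_ _ [pB nB] nC]; split => //.
  split; first exact: prec_del.
  move=> E; apply: (strict_del mB mB0 vB0); [by move=> E'; apply: nB; rewrite E' | by rewrite E].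
case=> C [mC [pC nC1] [pC2 nC2]].
have [C' [mC' EC vC']] := ext mC.
apply: nC; exists C'; split => //; split.
- apply: (lift_le EC pC) => _ vX; apply: vC'.
  apply: (addv mB0 mB0v vB0 vX (proj1 mC) pC).
- move=> E; apply: nC1; by rewrite -EC E.
- apply: (lift_ge EC pC2) => vX.
  by have := subsetP pB v; rewrite !inE vB0 vX => /(_ isT) /andP[].
- move=> E; apply: nC2; by rewrite -EC E.
Qed.
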